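(* Let $\alpha\in\mathbb{R}$ be fixed, let $\mathbf{u},\mathbf{v}$ satisfy the standing assumptions below, and let $h\in C_c^1(\mathbb{D})$. Then $h$ can be recovered (in particular, is uniquely determined) from $\mathcal{V}_\alpha h$.
   Context: $\mathbb{D}$ is the open unit disc in $\mathbb{R}^2$; $C_c^1(\mathbb{D})$ denotes $C^1$ functions with compact support in $\mathbb{D}$. Standing assumptions: $\mathbf{u},\mathbf{v}$ are $C^1$ vector fields on $\mathbb{R}^2$ with $|\mathbf{u}|=|\mathbf{v}|=1$, linearly independent at every point, whose integral curves are straight lines ($\mathbf{u}(\mathbf{x}+t\mathbf{u}(\mathbf{x}))=\mathbf{u}(\mathbf{x})$, $\mathbf{v}(\mathbf{x}+t\mathbf{v}(\mathbf{x}))=\mathbf{v}(\mathbf{x})$ for $t\ge0$). The weighted V-line transform is $\mathcal{V}_\alpha h(\mathbf{x})=\int_0^\infty h(\mathbf{x}+t\mathbf{u}(\mathbf{x}))\,dt+\alpha\int_0^\infty h(\mathbf{x}+t\mathbf{v}(\mathbf{x}))\,dt$. *)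

(* Defs.v *)
From Stdlib Require Import Reals.
From Coquelicot Require Import Coquelicot.
Open Scope R_scope.

Definition pt := (R * R)%type.
Definition padd (p q : pt) : pt := (fst p + fst q, snd p + snd q).
Definition pscal (t : R) (p : pt) : pt := (t * fst p, t * snd p).
Definition pnorm2 (p : pt) : R := fst p ^ 2 + snd p ^ 2.

Definition C1 (f : pt -> R) : Prop :=
  exists fx fy : pt -> R,
    (forall p : pt, is_derive (fun s => f (s, snd p)) (fst p) (fx p)) /\
    (forall p : pt, is_derive (fun s => f (fst p, s)) (snd p) (fy p)) /\
    (forall p : pt, continuous fx p) /\
    (forall p : pt, continuous fy p).

Definition C1_field (w : pt -> pt) : Prop :=
  C1 (fun p => fst (w p)) /\ C1 (fun p => snd (w p)).

(* h in C_c^1(D): C^1 on R^2 with compact support inside the open unit disc,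
   i.e. h vanishes outside some closed disc of radius r < 1. *)
Definition Cc1_disc (h : pt -> R) : Prop :=
  C1 h /\ exists r : R, 0 <= r < 1 /\
    forall p : pt, pnorm2 p > r ^ 2 -> h p = 0.

Definition straight_field (w : pt -> pt) : Prop :=
  forall (x : pt) (t : R), 0 <= t -> w (padd x (pscal t (w x))) = w x.

Definition standing_assumptions (u v : pt -> pt) : Prop :=
  C1_field u /\ C1_field v /\
  (forall x, pnorm2 (u x) = 1) /\ (forall x, pnorm2 (v x) = 1) /\
  (forall x, fst (u x) * snd (v x) - snd (u x) * fst (v x) <> 0) /\
  straight_field u /\ straight_field v.

Definition ray_int (h : pt -> R) (x w : pt) : R :=
  RInt_gen (fun t => h (padd x (pscal t w))) (at_point 0) (Rbar_locally p_infty).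

Definition Valpha (alpha : R) (u v : pt -> pt) (h : pt -> R) (x : pt) : R :=
  ray_int h x (u x) + alpha * ray_int h x (v x).

(* Main.v *)
Require Import Defs.
From Stdlib Require Import Reals.
From Coquelicot Require Import Coquelicot.
From Stdlib Require Import Lra Psatz Classical FunctionalExtensionality.
Open Scope R_scope.

Lemma ballR (x e y : R) : ball x e y <-> Rabs (y - x) < e.
Proof. unfold ball; simpl; unfold AbsRing_ball, abs, minus, plus, opp; simpl. tauto. Qed.

Lemma ballP (p q : pt) e : ball p e q <-> Rabs (fst q - fst p) < e /\ Rabs (snd q - snd p) < e.
Proof. unfold ball; simpl; unfold prod_ball. rewrite !ballR. tauto. Qed.

Lemma cont_eps (f : pt -> R) p : continuous f p ->
  forall e, 0 < e -> exists d, 0 < d /\ forall z, Rabs (fst z - fst p) < d -> Rabs (snd z - snd p) < d ->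
   Rabs (f z - f p) < e.
Proof.
  intros Hc e He.
  destruct (proj1 (filterlim_locally f (f p)) Hc (mkposreal e He)) as [d Hd].
  exists d. split. apply cond_pos. intros z H1 H2.
  apply ballR. apply Hd. apply ballP. tauto.
Qed.

Lemma mvt_bound (g dg : R -> R) a b B :
  (forall s, is_derive g s (dg s)) ->
  (forall s, Rabs (s - a) <= Rabs (b - a) -> Rabs (dg s) <= B) ->
  Rabs (g b - g a) <= B * Rabs (b - a).
Proof.
  intros Hd HB.
  destruct (MVT_gen g a b dg) as [c [Hc E]].
  - intros; apply Hd.
  - intros x _. apply derivable_continuous_pt. exists (dg x). apply is_derive_Reals.
    apply Hd.
  - rewrite E, Rabs_mult. apply Rmult_le_compat_r. apply Rabs_pos.
    apply HB. unfold Rmin, Rmax in Hc. destruct (Rle_dec a b); split_Rabs; lra.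
Qed.

Definition locLip (f : pt -> R) := forall p, exists M rho, 0 < rho /\ 0 <= M /\
  forall y, Rabs (fst y - fst p) < rho -> Rabs (snd y - snd p) < rho ->
   Rabs (f y - f p) <= M * (Rabs (fst y - fst p) + Rabs (snd y - snd p)).

Lemma C1_locLip f : Defs.C1 f -> locLip f.
Proof.
  intros [fx [fy [Hx [Hy [Cx Cy]]]]] p.
  destruct (cont_eps fx p (Cx p) 1 Rlt_0_1) as [d1 [Hd1 B1]].
  destruct (cont_eps fy p (Cy p) 1 Rlt_0_1) as [d2 [Hd2 B2]].
  exists (Rabs (fx p) + Rabs (fy p) + 2), (Rmin d1 d2).
  split. apply Rmin_pos; auto. split. pose proof (Rabs_pos (fx p)); pose proof (Rabs_pos (fy p)); lra.
  destruct p as [p1 p2]; intros [y1 y2]; simpl in *. intros H1 H2.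
  assert (Hm1 := Rmin_l d1 d2). assert (Hm2 := Rmin_r d1 d2).
  assert (E1 : Rabs (f (y1, y2) - f (p1, y2)) <= (Rabs (fx (p1,p2)) + 1) * Rabs (y1 - p1)).
  { apply (mvt_bound (fun s => f (s, y2)) (fun s => fx (s, y2))).
    - intros s. apply (Hx (s, y2)).
    - intros s Hs. assert (Rabs (fx (s,y2) - fx (p1,p2)) < 1) by (apply B1; simpl; lra).
      revert H; split_Rabs; lra. }
  assert (E2 : Rabs (f (p1, y2) - f (p1, p2)) <= (Rabs (fy (p1,p2)) + 1) * Rabs (y2 - p2)).
  { apply (mvt_bound (fun s => f (p1, s)) (fun s => fy (p1, s))).
    - intros s. apply (Hy (p1, s)).
    - intros s Hs. assert (Rabs (fy (p1,s) - fy (p1,p2)) < 1) by (apply B2; simpl; split_Rabs; lra).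
      revert H; split_Rabs; lra. }
  pose proof (Rabs_pos (y1 - p1)); pose proof (Rabs_pos (y2 - p2));
  pose proof (Rabs_pos (fx (p1,p2))); pose proof (Rabs_pos (fy (p1,p2))).
  replace (f (y1, y2) - f (p1, p2)) with ((f (y1, y2) - f (p1, y2)) + (f (p1, y2) - f (p1, p2))) by ring.
  eapply Rle_trans. apply Rabs_triang. nra.
Qed.
Lemma locLip_minus f g : locLip f -> locLip g -> locLip (fun q => f q - g q).
Proof.
  intros Hf Hg p. destruct (Hf p) as [M1 [r1 [Hr1 [HM1 B1]]]].
  destruct (Hg p) as [M2 [r2 [Hr2 [HM2 B2]]]].
  exists (M1 + M2), (Rmin r1 r2). split. apply Rmin_pos; auto. split. lra.
  intros y H1 H2. assert (Hm1 := Rmin_l r1 r2). assert (Hm2 := Rmin_r r1 r2).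
  specialize (B1 y ltac:(lra) ltac:(lra)). specialize (B2 y ltac:(lra) ltac:(lra)).
  replace (f y - g y - (f p - g p)) with ((f y - f p) - (g y - g p)) by ring.
  eapply Rle_trans. apply Rabs_triang. rewrite Rabs_Ropp. lra.
Qed.

Lemma abs_lin (x y a b : R) : Rabs (x * a + y * b) <= Rabs a * Rabs x + Rabs b * Rabs y.
Proof.
  eapply Rle_trans. apply Rabs_triang. rewrite !Rabs_mult. lra.
Qed.

Lemma locLip_affine f c1 c2 a1 a2 b1 b2 : locLip f ->
  locLip (fun q => f (c1 + fst q * a1 + snd q * b1, c2 + fst q * a2 + snd q * b2)).
Proof.
  intros Hf [s0 t0]. simpl.
  destruct (Hf (c1 + s0 * a1 + t0 * b1, c2 + s0 * a2 + t0 * b2)) as [M [r [Hr [HM B]]]].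
  set (C := Rabs a1 + Rabs a2 + Rabs b1 + Rabs b2 + 1).
  assert (HC : 0 < C). { unfold C. pose proof (Rabs_pos a1); pose proof (Rabs_pos a2);
    pose proof (Rabs_pos b1); pose proof (Rabs_pos b2). lra. }
  exists (M * C), (r / C). split. apply Rdiv_lt_0_compat; auto. split. nra.
  intros [s t]; simpl. intros H1 H2.
  pose proof (Rabs_pos a1); pose proof (Rabs_pos a2);
  pose proof (Rabs_pos b1); pose proof (Rabs_pos b2).
  pose proof (Rabs_pos (s - s0)); pose proof (Rabs_pos (t - t0)).
  assert (E1 := abs_lin (s - s0) (t - t0) a1 b1).
  assert (E2 := abs_lin (s - s0) (t - t0) a2 b2).
  replace (c1 + s * a1 + t * b1 - (c1 + s0 * a1 + t0 * b1)) with ((s - s0) * a1 + (t - t0) * b1) in * by ring.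
  replace (c2 + s * a2 + t * b2 - (c2 + s0 * a2 + t0 * b2)) with ((s - s0) * a2 + (t - t0) * b2) in * by ring.
  assert (Hrc : r / C * C = r) by (field; lra).
  assert (Q1 : Rabs ((s - s0) * a1 + (t - t0) * b1) < r).
  { assert ((Rabs a1 * Rabs (s - s0) + Rabs b1 * Rabs (t - t0)) <= (Rabs a1 + Rabs b1) * (r / C)) by nra.
    assert ((Rabs a1 + Rabs b1) * (r/C) < C * (r / C)). { apply Rmult_lt_compat_r.
      apply Rdiv_lt_0_compat; auto. unfold C; lra. } nra. }
  assert (Q2 : Rabs ((s - s0) * a2 + (t - t0) * b2) < r).
  { assert ((Rabs a2 * Rabs (s - s0) + Rabs b2 * Rabs (t - t0)) <= (Rabs a2 + Rabs b2) * (r / C)) by nra.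
    assert ((Rabs a2 + Rabs b2) * (r/C) < C * (r / C)). { apply Rmult_lt_compat_r.
      apply Rdiv_lt_0_compat; auto. unfold C; lra. } nra. }
  specialize (B (c1 + s * a1 + t * b1, c2 + s * a2 + t * b2)). simpl in B.
  replace (c1 + s * a1 + t * b1 - (c1 + s0 * a1 + t0 * b1)) with ((s - s0) * a1 + (t - t0) * b1) in B by ring.
  replace (c2 + s * a2 + t * b2 - (c2 + s0 * a2 + t0 * b2)) with ((s - s0) * a2 + (t - t0) * b2) in B by ring.
  specialize (B Q1 Q2). eapply Rle_trans. apply B.
  assert (Rabs ((s - s0) * a1 + (t - t0) * b1) + Rabs ((s - s0) * a2 + (t - t0) * b2)
    <= C * (Rabs (s - s0) + Rabs (t - t0))) by (unfold C; nra).
  rewrite Rmult_assoc. apply Rmult_le_compat_l; auto.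
Qed.

Lemma locLip_cont1 g : locLip g -> forall t s, continuity_pt (fun s => g (s, t)) s.
Proof.
  intros Hg t s. destruct (Hg (s, t)) as [M [r [Hr [HM B]]]].
  unfold continuity_pt, continue_in, limit1_in, limit_in. simpl. unfold R_dist.
  intros e He. exists (Rmin r (e / (M + 1))). split. apply Rmin_pos; auto.
  apply Rdiv_lt_0_compat; lra.
  intros x [_ Hx]. assert (Hm1 := Rmin_l r (e / (M + 1))). assert (Hm2 := Rmin_r r (e / (M + 1))).
  specialize (B (x, t)); simpl in B. replace (t - t) with 0 in B by ring. rewrite Rabs_R0 in B.
  specialize (B ltac:(lra) ltac:(lra)).
  assert (M * Rabs (x - s) <= M * (e / (M + 1))) by (apply Rmult_le_compat_l; lra).
  assert (M * (e / (M+1)) < e). { apply (Rmult_lt_reg_r (M+1)). lra. field_simplify; lra. }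
  lra.
Qed.

Lemma locLip_swap g : locLip g -> locLip (fun q => g (snd q, fst q)).
Proof.
  intros Hg [a b]. destruct (Hg (b, a)) as [M [r [Hr [HM B]]]]. exists M, r.
  split; auto. split; auto. intros [y1 y2]; simpl in *. intros. specialize (B (y2, y1)). simpl in B.
  rewrite Rplus_comm. apply B; auto.
Qed.

Lemma locLip_cont2 g : locLip g -> forall s t, continuity_pt (fun t => g (s, t)) t.
Proof.
  intros Hg s t. apply (locLip_cont1 _ (locLip_swap g Hg) s t).
Qed.

Lemma pair_eq (p q : pt) : fst p = fst q -> snd p = snd q -> p = q.
Proof. destruct p, q; simpl; intros; subst; auto. Qed.

Lemma small_zero a C e0 : 0 < e0 -> 0 <= C -> (forall e, 0 < e < e0 -> Rabs a <= C * e) -> a = 0.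
Proof.
  intros He0 HC H. destruct (Req_dec a 0) as [|Ha]; auto. exfalso.
  assert (Hpa : 0 < Rabs a) by (apply Rabs_pos_lt; auto).
  set (e := Rmin (e0 / 2) (Rabs a / (2 * (C + 1)))).
  assert (He : 0 < e) by (apply Rmin_pos; apply Rdiv_lt_0_compat; lra).
  assert (He1 : e <= e0 / 2) by apply Rmin_l.
  assert (He2 : e <= Rabs a / (2 * (C + 1))) by apply Rmin_r.
  specialize (H e ltac:(lra)).
  assert (C * e <= C * (Rabs a / (2 * (C + 1)))) by (apply Rmult_le_compat_l; lra).
  assert (C * (Rabs a / (2 * (C + 1))) < Rabs a).
  { apply (Rmult_lt_reg_r (2 * (C + 1))). lra. field_simplify; nra. }
  lra.
Qed.

Lemma unit_bound (e : pt) : pnorm2 e = 1 -> Rabs (fst e) <= 1 /\ Rabs (snd e) <= 1.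
Proof. unfold pnorm2; intros H. split; split_Rabs; nra. Qed.


Lemma back_local (w : pt -> pt) (L1 : locLip (fun p => fst (w p))) (L2 : locLip (fun p => snd (w p))) (U : forall x, pnorm2 (w x) = 1) (S : straight_field w) p : exists e0, 0 < e0 /\ forall eps, 0 <= eps <= e0 ->
  w (padd p (pscal (-eps) (w p))) = w p.
Proof.
  destruct (L1 p) as [M1 [r1 [Hr1 [HM1 B1]]]].
  destruct (L2 p) as [M2 [r2 [Hr2 [HM2 B2]]]].
  set (r := Rmin r1 r2). assert (Hr : 0 < r) by (apply Rmin_pos; auto).
  assert (Hra := Rmin_l r1 r2). assert (Hrb := Rmin_r r1 r2). fold r in Hra, Hrb.
  exists (Rmin (r / 4) (/ (2 * (M1 + M2 + 1)))). split.
  apply Rmin_pos. lra. apply Rinv_0_lt_compat; lra.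
  intros eps [He0 He1].
  assert (Hea : eps <= r / 4) by (eapply Rle_trans; [apply He1| apply Rmin_l]).
  assert (Heb : eps <= / (2 * (M1 + M2 + 1))) by (eapply Rle_trans; [apply He1| apply Rmin_r]).
  set (q := padd p (pscal (-eps) (w p))).
  set (y := padd q (pscal eps (w q))).
  assert (Sy : w y = w q) by (apply S; auto).
  set (d1 := fst (w q) - fst (w p)). set (d2 := snd (w q) - snd (w p)).
  assert (Y1 : fst y - fst p = eps * d1) by (unfold y, d1, q, padd, pscal; simpl; ring).
  assert (Y2 : snd y - snd p = eps * d2) by (unfold y, d2, q, padd, pscal; simpl; ring).
  destruct (unit_bound _ (U p)) as [U1 U2]. destruct (unit_bound _ (U q)) as [V1 V2].
  assert (Hd1 : Rabs d1 <= 2) by (unfold d1; revert U1 V1; split_Rabs; lra).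
  assert (Hd2 : Rabs d2 <= 2) by (unfold d2; revert U2 V2; split_Rabs; lra).
  assert (A1 : Rabs (fst y - fst p) < r1) by (rewrite Y1, Rabs_mult, (Rabs_right eps); nra).
  assert (A2 : Rabs (snd y - snd p) < r2) by (rewrite Y2, Rabs_mult, (Rabs_right eps); nra).
  assert (A1' : Rabs (fst y - fst p) < r2) by (rewrite Y1, Rabs_mult, (Rabs_right eps); nra).
  assert (A2' : Rabs (snd y - snd p) < r1) by (rewrite Y2, Rabs_mult, (Rabs_right eps); nra).
  specialize (B1 y A1 A2'). specialize (B2 y A1' A2). cbv beta in B1, B2.
  rewrite Sy in B1, B2. fold d1 in B1. fold d2 in B2.
  rewrite Y1, Y2, !Rabs_mult, (Rabs_right eps) in B1, B2 by lra.
  pose proof (Rabs_pos d1); pose proof (Rabs_pos d2).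
  assert (Hk : (M1 + M2) * eps <= / 2).
  { assert ((M1 + M2) * eps <= (M1 + M2 + 1) * / (2 * (M1 + M2 + 1))) by nra.
    assert ((M1 + M2 + 1) * / (2 * (M1 + M2 + 1)) = / 2) by (field; lra). lra. }
  assert (Rabs d1 + Rabs d2 <= / 2 * (Rabs d1 + Rabs d2)) by nra.
  assert (Rabs d1 = 0) by lra. assert (Rabs d2 = 0) by lra.
  apply pair_eq.
  - assert (d1 = 0). { destruct (Req_dec d1 0) as [E|E]; auto. exfalso. pose proof (Rabs_pos_lt d1 E). lra. }
    unfold d1 in *; lra.
  - assert (d2 = 0). { destruct (Req_dec d2 0) as [E|E]; auto. exfalso. pose proof (Rabs_pos_lt d2 E). lra. }
    unfold d2 in *; lra.
Qed.

Lemma back_all (w : pt -> pt) (L1 : locLip (fun p => fst (w p))) (L2 : locLip (fun p => snd (w p))) (U : forall x, pnorm2 (w x) = 1) (S : straight_field w) x s1 : 0 <= s1 -> w (padd x (pscal (-s1) (w x))) = w x.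
Proof.
  intros Hs1. set (e := w x).
  destruct (classic (w (padd x (pscal (-s1) e)) = e)) as [|Hne]; auto. exfalso.
  set (E := fun s => 0 <= s /\ forall sg, 0 <= sg <= s -> w (padd x (pscal (-sg) e)) = e).
  assert (Hx0 : forall sg, sg = 0 -> padd x (pscal (-sg) e) = x).
  { intros sg ->. apply pair_eq; unfold padd, pscal; simpl; ring. }
  assert (HE0 : E 0). { split. lra. intros sg Hsg. rewrite Hx0 by lra. reflexivity. }
  assert (Hb : forall s, E s -> s <= s1).
  { intros s [_ Hs]. destruct (Rle_lt_dec s s1); auto. exfalso; apply Hne; apply Hs; lra. }
  destruct (completeness E) as [m [Hub Hlub]].
  { exists s1. intros s Hs; apply Hb; auto. }
  { exists 0; auto. }
  assert (m0 : 0 <= m) by (apply Hub; auto).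
  assert (HC : forall sg, 0 <= sg < m -> w (padd x (pscal (-sg) e)) = e).
  { intros sg Hsg. destruct (classic (exists s, E s /\ sg < s)) as [[s [[_ Hs] Hlt]]|Hn].
    apply Hs; lra. exfalso. assert (m <= sg). { apply Hlub. intros s Hs.
    destruct (Rle_lt_dec s sg); auto. exfalso; apply Hn; eauto. } lra. }
  set (q0 := padd x (pscal (-m) e)).
  assert (HQ : w q0 = e).
  { destruct (Req_dec m 0) as [Hm|Hm].
    - unfold q0. rewrite Hx0 by auto. reflexivity.
    - destruct (L1 q0) as [M1 [r1 [Hr1 [HM1 B1]]]].
      destruct (L2 q0) as [M2 [r2 [Hr2 [HM2 B2]]]].
      destruct (unit_bound _ (U x)) as [U1 U2]. fold e in U1, U2.
      assert (Key : forall eta, 0 < eta < Rmin m (Rmin r1 r2) ->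
        Rabs (fst e - fst (w q0)) <= (2 * M1) * eta /\ Rabs (snd e - snd (w q0)) <= (2 * M2) * eta).
      { intros eta Heta.
        assert (Hm1 := Rmin_l m (Rmin r1 r2)). assert (Hm2 := Rmin_r m (Rmin r1 r2)).
        assert (Hm3 := Rmin_l r1 r2). assert (Hm4 := Rmin_r r1 r2).
        set (P := padd x (pscal (- (m - eta)) e)).
        assert (HP : w P = e) by (apply HC; lra).
        assert (P1 : fst P - fst q0 = eta * fst e) by (unfold P, q0, padd, pscal; simpl; ring).
        assert (P2 : snd P - snd q0 = eta * snd e) by (unfold P, q0, padd, pscal; simpl; ring).
        assert (Q1 : Rabs (fst P - fst q0) <= eta) by (rewrite P1, Rabs_mult, (Rabs_right eta); nra).
        assert (Q2 : Rabs (snd P - snd q0) <= eta) by (rewrite P2, Rabs_mult, (Rabs_right eta); nra).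
        specialize (B1 P ltac:(lra) ltac:(lra)). specialize (B2 P ltac:(lra) ltac:(lra)).
        cbv beta in B1, B2. rewrite HP in B1, B2. split; [eapply Rle_trans; [apply B1|] | eapply Rle_trans; [apply B2|]]; [replace (2*M1*eta) with (M1*(eta+eta)) by ring | replace (2*M2*eta) with (M2*(eta+eta)) by ring]; apply Rmult_le_compat_l; lra. }
      assert (Hpos : 0 < Rmin m (Rmin r1 r2)) by (apply Rmin_pos; [lra| apply Rmin_pos; auto]).
      apply pair_eq; symmetry; apply Rminus_diag_uniq.
      + apply (small_zero _ (2 * M1) _ Hpos). lra. intros; apply Key; auto.
      + apply (small_zero _ (2 * M2) _ Hpos). lra. intros; apply Key; auto. }
  destruct (back_local w L1 L2 U S q0) as [e0 [He0 Hloc]].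
  assert (HE : E (m + e0)).
  { split. lra. intros sg Hsg. destruct (Rlt_le_dec sg m). apply HC; lra.
    destruct (Req_dec sg m) as [Heq|Hneq].
    - rewrite Heq. exact HQ.
    - specialize (Hloc (sg - m) ltac:(lra)). rewrite HQ in Hloc.
      replace (padd x (pscal (- sg) e)) with (padd q0 (pscal (- (sg - m)) e)). exact Hloc.
      apply pair_eq; unfold q0, padd, pscal; simpl; ring. }
  specialize (Hub _ HE). lra.
Qed.

Lemma line_const (w : pt -> pt) (L1 : locLip (fun p => fst (w p))) (L2 : locLip (fun p => snd (w p))) (U : forall x, pnorm2 (w x) = 1) (S : straight_field w) x s : w (padd x (pscal s (w x))) = w x.
Proof.
  destruct (Rle_lt_dec 0 s). apply S; auto.
  replace s with (- (- s)) by ring. apply (back_all w L1 L2 U S). lra.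
Qed.

Lemma det_zero (w : pt -> pt) (L1 : locLip (fun p => fst (w p))) (L2 : locLip (fun p => snd (w p))) (U : forall x, pnorm2 (w x) = 1) (S : straight_field w) x y : fst (w x) * snd (w y) - snd (w x) * fst (w y) = 0.
Proof.
  set (e := w x). set (f := w y).
  destruct (Req_dec (fst e * snd f - snd e * fst f) 0) as [|HD]; auto. exfalso.
  set (D := fst e * snd f - snd e * fst f) in *.
  set (d1 := fst y - fst x). set (d2 := snd y - snd x).
  set (s := (d1 * snd f - fst f * d2) / D).
  set (r := (fst e * d2 - snd e * d1) / (- D)).
  assert (Hz : padd x (pscal s e) = padd y (pscal r f)).
  { apply pair_eq; unfold padd, pscal, s, r, d1, d2, D; simpl; field; exact HD. }
  assert (Hef : e = f).
  { unfold e at 1. rewrite <- (line_const w L1 L2 U S x s). fold e. rewrite Hz. unfold f. apply (line_const w L1 L2 U S). }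
  apply HD. unfold D. rewrite Hef. ring.
Qed.


Lemma locLip_line f : locLip f -> forall x d t, continuity_pt (fun t => f (padd x (pscal t d))) t.
Proof.
  intros Hf x d t.
  assert (H := locLip_cont1 _ (locLip_affine f (fst x) (snd x) (fst d) (snd d) 0 0 Hf) 0 t).
  simpl in H. eapply continuity_pt_ext; [|exact H]. intros s. simpl. f_equal.
  apply pair_eq; unfold padd, pscal; simpl; ring.
Qed.

Lemma field_const w : locLip (fun p => fst (w p)) -> locLip (fun p => snd (w p)) ->
  (forall x, pnorm2 (w x) = 1) -> straight_field w -> forall x y, w x = w y.
Proof.
  intros L1 L2 U S x y.
  set (d := (fst y - fst x, snd y - snd x)).
  set (e := w x).
  set (g := fun t => fst (w (padd x (pscal t d))) * fst e + snd (w (padd x (pscal t d))) * snd e).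
  assert (Hg2 : forall t, g t * g t = 1).
  { intros t. unfold g. set (f := w (padd x (pscal t d))).
    assert (HD := det_zero w L1 L2 U S x (padd x (pscal t d))). fold e f in HD.
    assert (Ue := U x). assert (Uf := U (padd x (pscal t d))). fold e in Ue. fold f in Uf.
    unfold pnorm2 in *.
    assert (Id : (fst f * fst e + snd f * snd e) * (fst f * fst e + snd f * snd e) + (fst e * snd f - snd e * fst f)^2
      = (fst e ^ 2 + snd e ^ 2) * (fst f ^ 2 + snd f ^ 2)) by ring.
    rewrite HD, Ue, Uf in Id. lra. }
  assert (Hc : continuity g).
  { intros t. unfold g. apply continuity_pt_plus; apply continuity_pt_mult.
    - apply (locLip_line _ L1).
    - apply continuity_pt_const; intros ? ?; reflexivity.
    - apply (locLip_line _ L2).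
    - apply continuity_pt_const; intros ? ?; reflexivity. }
  assert (Hx : padd x (pscal 0 d) = x) by (apply pair_eq; unfold padd, pscal; simpl; ring).
  assert (Hy : padd x (pscal 1 d) = y) by (apply pair_eq; unfold d, padd, pscal; simpl; ring).
  assert (G0 : g 0 = 1).
  { unfold g. rewrite Hx. fold e. assert (Ue := U x). fold e in Ue. unfold pnorm2 in Ue. lra. }
  assert (G1 : g 1 = 1).
  { destruct (Rlt_le_dec (g 1) 0).
    - exfalso. destruct (IVT (fun t => - g t) 0 1) as [z [_ Hz]].
      + intros t. apply continuity_pt_opp. apply Hc.
      + lra. + lra. + lra.
      + specialize (Hg2 z). assert (g z = 0) by lra. rewrite H in Hg2. lra.
    - specialize (Hg2 1). nra. }
  unfold g in G1. rewrite Hy in G1. fold e in G1.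
  assert (Ue := U x). assert (Uf := U y). fold e in Ue. unfold pnorm2 in *.
  assert (Z : (fst e - fst (w y))^2 + (snd e - snd (w y))^2 = 0).
  { replace ((fst e - fst (w y))^2 + (snd e - snd (w y))^2) with
     ((fst e^2 + snd e^2) + (fst (w y)^2 + snd (w y)^2) - 2*(fst (w y) * fst e + snd (w y) * snd e)) by ring.
    rewrite Ue, Uf, G1. ring. }
  pose proof (pow2_ge_0 (fst e - fst (w y))). pose proof (pow2_ge_0 (snd e - snd (w y))).
  assert (Z1 : (fst e - fst (w y))^2 = 0) by lra. assert (Z2 : (snd e - snd (w y))^2 = 0) by lra.
  assert (fst e - fst (w y) = 0) by (apply Rsqr_0_uniq; unfold Rsqr; rewrite <- Z1; ring). assert (snd e - snd (w y) = 0) by (apply Rsqr_0_uniq; unfold Rsqr; rewrite <- Z2; ring).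
  apply pair_eq; lra.
Qed.

Lemma scalR (x y : R) : scal x y = x * y. Proof. reflexivity. Qed.
Lemma plusR (x y : R) : plus x y = x + y. Proof. reflexivity. Qed.
Lemma minusR (x y : R) : minus x y = x - y. Proof. reflexivity. Qed.

Lemma cont_c (f : R -> R) x : continuity_pt f x -> continuous f x.
Proof. intros H; apply continuity_pt_filterlim; auto. Qed.

Lemma exR (f : R -> R) a b : (forall x, continuity_pt f x) -> ex_RInt f a b.
Proof. intros H. apply (@ex_RInt_continuous R_CompleteNormedModule). intros; apply cont_c; auto. Qed.

Lemma ray_lemma (f : R -> R) K : (forall x, continuity_pt f x) -> (forall x, K <= x -> f x = 0) ->
  forall s, RInt_gen (fun t => f (s + t)) (at_point 0) (Rbar_locally p_infty) = RInt f s K.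
Proof.
  intros Hc HK s. apply is_RInt_gen_unique.
  intros P HP. exists (fun a => a = 0) (fun b => Rmax 0 (K - s) < b).
  - reflexivity.
  - exists (Rmax 0 (K - s)); auto.
  - intros a b -> Hb. simpl. exists (RInt f s K). split; [|apply locally_singleton; auto].
    assert (Hm := Rmax_r 0 (K - s)).
    assert (E : RInt (fun t => f (s + t)) 0 b = RInt f s K).
    { assert (E1 : RInt (fun t => f (s + t)) 0 b = RInt f (1 * 0 + s) (1 * b + s)).
      { rewrite <- RInt_comp_lin. apply RInt_ext. intros x _. unfold scal; simpl; unfold mult; simpl.
        rewrite Rmult_1_l. f_equal; ring. apply exR; auto. }
      rewrite E1. replace (1 * 0 + s) with s by ring.
      rewrite <- (RInt_Chasles f s K (1 * b + s)) by (apply exR; auto).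
      assert (E2 : RInt f K (1 * b + s) = 0).
      { rewrite (RInt_ext f (fun _ => 0)). rewrite RInt_const, scalR. exact (Rmult_0_r _).
        intros x Hx. apply HK. unfold Rmin in Hx. destruct (Rle_dec K (1 * b + s)); lra. }
      rewrite E2, plusR. exact (Rplus_0_r _). }
    rewrite <- E. apply RInt_correct. apply exR. intros x. 
    apply (continuity_pt_comp (fun t => s + t) f). apply continuity_pt_plus.
    apply continuity_pt_const; intros ? ?; reflexivity. apply continuity_pt_id. apply Hc.
Qed.

Lemma est (f : R -> R) a b c e : (forall x, continuity_pt f x) ->
  (forall x, Rmin a b <= x <= Rmax a b -> Rabs (f x - c) <= e) ->
  Rabs (RInt f a b - (b - a) * c) <= Rabs (b - a) * e.
Proof.
  intros Hc Hb.
  assert (E : RInt f a b - (b - a) * c = RInt (fun x => f x - c) a b).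
  { change (fun x => f x - c) with (fun x => minus (f x) c).
    rewrite (RInt_minus f (fun _ => c)). rewrite RInt_const. reflexivity.
    apply exR; auto. apply ex_RInt_const. }
  rewrite E. apply (norm_RInt_le_const_abs (fun x => f x - c) a b). apply Hb.
  apply (@RInt_correct R_CompleteNormedModule). apply exR. intros x. apply continuity_pt_minus. apply Hc.
  apply continuity_pt_const; intros ? ?; reflexivity.
Qed.

Lemma quad_const (G : R -> R) :
  (forall t0, exists C d, 0 < d /\ forall t, Rabs t < d -> Rabs (G (t0 + t) - G t0) <= C * t ^ 2) ->
  forall t, G t = G 0.
Proof.
  intros H.
  assert (Hd : forall t0, derivable_pt_lim G t0 0).
  { intros t0 e He. destruct (H t0) as [C [d [Hd B]]].
    assert (Hp : 0 < Rmin d (e / (Rabs C + 1))) by (apply Rmin_pos; auto; apply Rdiv_lt_0_compat; [lra| pose proof (Rabs_pos C); lra]).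
    exists (mkposreal _ Hp). simpl. intros h Hh Hlt.
    assert (Hm1 := Rmin_l d (e / (Rabs C + 1))). assert (Hm2 := Rmin_r d (e / (Rabs C + 1))).
    specialize (B h ltac:(lra)).
    assert (Hha : 0 < Rabs h) by (apply Rabs_pos_lt; auto).
    rewrite Rminus_0_r. unfold Rdiv. rewrite Rabs_mult, Rabs_inv.
    assert (Rabs (G (t0 + h) - G t0) <= Rabs C * (Rabs h * Rabs h)).
    { eapply Rle_trans. apply B. replace (h ^ 2) with (h * h) by ring. rewrite <- Rabs_mult.
      rewrite Rabs_right with (r := h * h) by nra. pose proof (Rle_abs C). nra. }
    apply (Rmult_lt_reg_r (Rabs h)); auto. rewrite Rmult_assoc, Rinv_l by lra. rewrite Rmult_1_r.
    assert (Rabs C * Rabs h < e). { 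
      assert (Rabs C * Rabs h <= Rabs C * (e / (Rabs C + 1))) by (apply Rmult_le_compat_l; [apply Rabs_pos|lra]).
      assert (Rabs C * (e / (Rabs C + 1)) < e). { apply (Rmult_lt_reg_r (Rabs C + 1)). pose proof (Rabs_pos C); lra.
        field_simplify; [|pose proof (Rabs_pos C); lra]. pose proof (Rabs_pos C); nra. }
      lra. }
    nra. }
  intros t. destruct (MVT_gen G 0 t (fun _ => 0)) as [c [_ Hc]].
  - intros x _. apply is_derive_Reals. apply Hd.
  - intros x _. apply derivable_continuous_pt. exists 0. apply Hd.
  - lra.
Qed.

Lemma chasles_diff (f : R -> R) x y K : (forall z, continuity_pt f z) ->
  RInt f y K - RInt f x K = - RInt f x y.
Proof.
  intros Hc. rewrite <- (RInt_Chasles f x y K) by (apply exR; auto). rewrite plusR. ring.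
Qed.

Lemma core (H : pt -> R) (K al : R) : locLip H ->
  (forall s t, RInt (fun x => H (x, t)) s K + al * RInt (fun y => H (s, y)) t K = 0) ->
  forall s t, H (s, t) = 0.
Proof.
  intros HL Key.
  assert (C1 : forall t x, continuity_pt (fun x => H (x, t)) x) by (apply locLip_cont1; auto).
  assert (C2 : forall s y, continuity_pt (fun y => H (s, y)) y) by (apply locLip_cont2; auto).
  assert (Step1 : (forall s t, RInt (fun x => H (x, t)) s K = 0) -> forall s t, H (s, t) = 0).
  { intros HA s t. destruct (HL (s, t)) as [M [rho [Hr [HM B]]]].
    apply (small_zero _ M rho Hr HM). intros eta Heta.
    assert (I0 : RInt (fun x => H (x, t)) s (s + eta) = 0).
    { assert (E := chasles_diff (fun x => H (x, t)) s (s + eta) K (C1 t)). rewrite !HA in E. lra. }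
    assert (E := est (fun x => H (x, t)) s (s + eta) (H (s, t)) (M * eta) (C1 t)).
    rewrite I0 in E. replace (s + eta - s) with eta in E by ring.
    assert (Hb : forall x, Rmin s (s + eta) <= x <= Rmax s (s + eta) -> Rabs (H (x, t) - H (s, t)) <= M * eta).
    { intros x Hx. rewrite Rmin_left, Rmax_right in Hx by lra.
      specialize (B (x, t)). simpl in B. replace (t - t) with 0 in B by ring. rewrite Rabs_R0 in B.
      assert (Rabs (x - s) <= eta) by (rewrite Rabs_right; lra).
      eapply Rle_trans. apply B; lra. apply Rmult_le_compat_l; lra. }
    specialize (E Hb). rewrite Rabs_right with (r := eta) in E by lra.
    replace (0 - eta * H (s, t)) with (- (eta * H (s, t))) in E by ring.
    rewrite Rabs_Ropp, Rabs_mult, Rabs_right with (r := eta) in E by lra.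
    apply (Rmult_le_reg_l eta). lra. lra. }
  apply Step1.
  destruct (Req_dec al 0) as [H0|Hal].
  { intros s t. specialize (Key s t). rewrite H0 in Key. lra. }
  assert (HB : forall s t, RInt (fun y => H (s, y)) t K = 0).
  { intros s0 t0.
    set (G := fun t => RInt (fun y => H (s0 + al * t, y)) (t0 + t) K).
    assert (HG : forall t, G t = G 0).
    { apply quad_const. intros t1.
      set (s1 := s0 + al * t1). set (u1 := t0 + t1).
      destruct (HL (s1, u1)) as [M [rho [Hr [HM B]]]].
      assert (Hap : 0 < Rabs al) by (apply Rabs_pos_lt; auto).
      exists (M * (2 * Rabs al + 1)), (rho / (Rabs al + 1)). split.
      apply Rdiv_lt_0_compat; lra.
      intros t Ht.
      assert (Hat : Rabs (al * t) < rho).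
      { rewrite Rabs_mult. assert (Rabs t * (Rabs al + 1) < rho).
        { apply (Rmult_lt_reg_r (/ (Rabs al + 1))). apply Rinv_0_lt_compat; lra.
          rewrite Rmult_assoc, Rinv_r by lra. rewrite Rmult_1_r. exact Ht. }
        pose proof (Rabs_pos t). nra. }
      assert (Htt : Rabs t < rho).
      { assert (Rabs t * (Rabs al + 1) < rho).
        { apply (Rmult_lt_reg_r (/ (Rabs al + 1))). apply Rinv_0_lt_compat; lra.
          rewrite Rmult_assoc, Rinv_r by lra. rewrite Rmult_1_r. exact Ht. }
        pose proof (Rabs_pos t). nra. }
      set (H1 := H (s1, u1)).
      set (I1 := RInt (fun y => H (s1 + al * t, y)) u1 (u1 + t)).
      set (I2 := RInt (fun x => H (x, u1)) s1 (s1 + al * t)).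
      assert (EG : G (t1 + t) - G t1 = - I1 + I2 / al).
      { unfold G, I1, I2.
        replace (s0 + al * (t1 + t)) with (s1 + al * t) by (unfold s1; ring).
        replace (t0 + (t1 + t)) with (u1 + t) by (unfold u1; ring). fold s1 u1.
        assert (E1 := chasles_diff (fun y => H (s1 + al * t, y)) u1 (u1 + t) K (C2 _)).
        assert (E2 := chasles_diff (fun x => H (x, u1)) s1 (s1 + al * t) K (C1 _)).
        assert (K1 := Key (s1 + al * t) u1). assert (K2 := Key s1 u1).
        set (X1 := RInt (fun y => H (s1 + al * t, y)) (u1 + t) K) in *.
        set (X2 := RInt (fun y => H (s1 + al * t, y)) u1 K) in *.
        set (X3 := RInt (fun y => H (s1, y)) u1 K) in *.
        set (Y1 := RInt (fun x => H (x, u1)) (s1 + al * t) K) in *.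
        set (Y2 := RInt (fun x => H (x, u1)) s1 K) in *.
        set (J1 := RInt (fun y => H (s1 + al * t, y)) u1 (u1 + t)) in *.
        set (J2 := RInt (fun x => H (x, u1)) s1 (s1 + al * t)) in *.
        assert (EJ : J2 = al * (X2 - X3)) by lra.
        rewrite EJ. field_simplify; [|auto]. lra. }
      rewrite EG.
      assert (B1 : Rabs (I1 - t * H1) <= Rabs t * (M * (Rabs (al * t) + Rabs t))).
      { assert (E := est (fun y => H (s1 + al * t, y)) u1 (u1 + t) H1 (M * (Rabs (al * t) + Rabs t)) (C2 _)).
        replace (u1 + t - u1) with t in E by ring. apply E.
        intros x Hx. specialize (B (s1 + al * t, x)). simpl in B.
        replace (s1 + al * t - s1) with (al * t) in B by ring.
        assert (Rabs (x - u1) <= Rabs t).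
        { unfold Rmin, Rmax in Hx. destruct (Rle_dec u1 (u1 + t)); split_Rabs; lra. }
        eapply Rle_trans. apply B; lra. apply Rmult_le_compat_l; lra. }
      assert (B2 : Rabs (I2 - al * t * H1) <= Rabs (al * t) * (M * Rabs (al * t))).
      { assert (E := est (fun x => H (x, u1)) s1 (s1 + al * t) H1 (M * Rabs (al * t)) (C1 _)).
        replace (s1 + al * t - s1) with (al * t) in E by ring. apply E.
        intros x Hx. specialize (B (x, u1)). simpl in B.
        replace (u1 - u1) with 0 in B by ring. rewrite Rabs_R0, Rplus_0_r in B.
        assert (Rabs (x - s1) <= Rabs (al * t)).
        { unfold Rmin, Rmax in Hx. destruct (Rle_dec s1 (s1 + al * t)); split_Rabs; lra. }
        eapply Rle_trans. apply B; lra. apply Rmult_le_compat_l; lra. }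
      replace (- I1 + I2 / al) with (- (I1 - t * H1) + (I2 - al * t * H1) / al) by (field; auto).
      eapply Rle_trans. apply Rabs_triang. rewrite Rabs_Ropp.
      assert (B3 : Rabs ((I2 - al * t * H1) / al) <= M * Rabs al * (Rabs t * Rabs t)).
      { unfold Rdiv. rewrite Rabs_mult, Rabs_inv.
        rewrite Rabs_mult in B2.
        apply (Rmult_le_reg_r (Rabs al)); auto. rewrite Rmult_assoc, Rinv_l by lra.
        nra. }
      rewrite Rabs_mult in B1.
      replace (t ^ 2) with (Rabs t * Rabs t).
      2:{ rewrite <- Rabs_mult. rewrite Rabs_right by nra. ring. }
      pose proof (Rabs_pos t). nra. }
    assert (G0 : G 0 = RInt (fun y => H (s0, y)) t0 K).
    { unfold G. rewrite Rmult_0_r, Rplus_0_r, Rplus_0_r. reflexivity. }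
    assert (GK : G (K - t0) = 0).
    { unfold G. replace (t0 + (K - t0)) with K by ring. exact (@RInt_point R_CompleteNormedModule K _). }
    rewrite <- G0, <- (HG (K - t0)). exact GK. }
  intros s t. specialize (Key s t). rewrite HB in Key. lra.
Qed.

Theorem theorem6p1 (alpha : R) (u v : pt -> pt) (h1 h2 : pt -> R) :
  standing_assumptions u v ->
  Cc1_disc h1 -> Cc1_disc h2 ->
  (forall x : pt, Valpha alpha u v h1 x = Valpha alpha u v h2 x) ->
  forall p : pt, h1 p = h2 p.
Proof.
  intros [[Cu1 Cu2] [[Cv1 Cv2] [Uu [Uv [Hdet [Su Sv]]]]]] [Ch1 [r1 [Hr1 Z1]]] [Ch2 [r2 [Hr2 Z2]]] HV.
  assert (Ku := field_const u (C1_locLip _ Cu1) (C1_locLip _ Cu2) Uu Su).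
  assert (Kv := field_const v (C1_locLip _ Cv1) (C1_locLip _ Cv2) Uv Sv).
  set (a := u (0,0)). set (b := v (0,0)).
  assert (Ha : forall x, u x = a) by (intros; apply Ku).
  assert (Hb : forall x, v x = b) by (intros; apply Kv).
  assert (HD : fst a * snd b - snd a * fst b <> 0) by apply Hdet.
  assert (Ua : fst a ^ 2 + snd a ^ 2 = 1) by apply Uu.
  assert (Ub : fst b ^ 2 + snd b ^ 2 = 1) by apply Uv.
  set (D := fst a * snd b - snd a * fst b) in *.
  assert (HDp : 0 < Rabs D) by (apply Rabs_pos_lt; auto).
  set (r := Rmax r1 r2).
  assert (Hrr1 := Rmax_l r1 r2). assert (Hrr2 := Rmax_r r1 r2). fold r in Hrr1, Hrr2.
  set (Z := fun s t => (0 + s * fst a + t * fst b, 0 + s * snd a + t * snd b) : pt).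
  set (K := (r + 1) / Rabs D).
  assert (HK : K * Rabs D = r + 1) by (unfold K; field; lra).
  assert (Zs : forall s t, K <= s \/ K <= t -> h1 (Z s t) = 0 /\ h2 (Z s t) = 0).
  { intros s t Hst.
    assert (Big : pnorm2 (Z s t) > r ^ 2).
    { assert (L1 : pnorm2 (Z s t) >= (s * D) ^ 2).
      { change (pnorm2 (Z s t)) with ((0 + s * fst a + t * fst b) ^ 2 + (0 + s * snd a + t * snd b) ^ 2). unfold D.
        assert (Id : ((0 + s * fst a + t * fst b) ^ 2 + (0 + s * snd a + t * snd b) ^ 2) * (fst b ^ 2 + snd b ^ 2)
          = (s * (fst a * snd b - snd a * fst b)) ^ 2 + (fst b * (0 + s * fst a + t * fst b) + snd b * (0 + s * snd a + t * snd b)) ^ 2) by ring.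
        rewrite Ub, Rmult_1_r in Id. rewrite Id.
        pose proof (pow2_ge_0 (fst b * (0 + s * fst a + t * fst b) + snd b * (0 + s * snd a + t * snd b))). lra. }
      assert (L2 : pnorm2 (Z s t) >= (t * D) ^ 2).
      { change (pnorm2 (Z s t)) with ((0 + s * fst a + t * fst b) ^ 2 + (0 + s * snd a + t * snd b) ^ 2). unfold D.
        assert (Id : ((0 + s * fst a + t * fst b) ^ 2 + (0 + s * snd a + t * snd b) ^ 2) * (fst a ^ 2 + snd a ^ 2)
          = (t * (fst a * snd b - snd a * fst b)) ^ 2 + (fst a * (0 + s * fst a + t * fst b) + snd a * (0 + s * snd a + t * snd b)) ^ 2) by ring.
        rewrite Ua, Rmult_1_r in Id. rewrite Id.
        pose proof (pow2_ge_0 (fst a * (0 + s * fst a + t * fst b) + snd a * (0 + s * snd a + t * snd b))). lra. }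
      assert (Hr0 : 0 <= r) by lra.
      assert (HK0 : 0 < K) by (unfold K; apply Rdiv_lt_0_compat; lra).
      assert (Sq : forall x, K <= x -> (x * D) ^ 2 > r ^ 2).
      { intros x Hx. replace ((x * D) ^ 2) with ((x * Rabs D) ^ 2).
        2:{ rewrite !Rpow_mult_distr, pow2_abs. reflexivity. }
        assert (x * Rabs D >= r + 1) by nra. nra. }
      destruct Hst as [Hs|Ht]. specialize (Sq s Hs). lra. specialize (Sq t Ht). lra. }
    split. apply Z1. assert (r1 ^ 2 <= r ^ 2) by nra. lra.
    apply Z2. assert (r2 ^ 2 <= r ^ 2) by nra. lra. }
  assert (L1 : locLip (fun q => h1 (Z (fst q) (snd q)))) by
    exact (locLip_affine h1 0 0 (fst a) (snd a) (fst b) (snd b) (C1_locLip _ Ch1)).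
  assert (L2 : locLip (fun q => h2 (Z (fst q) (snd q)))) by
    exact (locLip_affine h2 0 0 (fst a) (snd a) (fst b) (snd b) (C1_locLip _ Ch2)).
  assert (RA : forall g, locLip (fun q => g (Z (fst q) (snd q))) -> (forall s t, K <= s -> g (Z s t) = 0) ->
     forall s t, ray_int g (Z s t) a = RInt (fun x => g (Z x t)) s K).
  { intros g Lg Hg s t. unfold ray_int.
    rewrite <- (ray_lemma (fun x => g (Z x t)) K).
    - f_equal. apply functional_extensionality. intros t0. f_equal. apply pair_eq; unfold Z, padd, pscal; cbn [fst snd]; ring.
    - intros x. apply (locLip_cont1 _ Lg t x).
    - intros x Hx. apply Hg; auto. }
  assert (RB : forall g, locLip (fun q => g (Z (fst q) (snd q))) -> (forall s t, K <= t -> g (Z s t) = 0) ->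
     forall s t, ray_int g (Z s t) b = RInt (fun y => g (Z s y)) t K).
  { intros g Lg Hg s t. unfold ray_int.
    rewrite <- (ray_lemma (fun y => g (Z s y)) K).
    - f_equal. apply functional_extensionality. intros t0. f_equal. apply pair_eq; unfold Z, padd, pscal; cbn [fst snd]; ring.
    - intros x. apply (locLip_cont2 _ Lg s x).
    - intros x Hx. apply Hg; auto. }
  set (Hq := fun q : pt => h1 (Z (fst q) (snd q)) - h2 (Z (fst q) (snd q))).
  assert (HL : locLip Hq) by (apply locLip_minus; auto).
  assert (CA : forall g, locLip (fun q => g (Z (fst q) (snd q))) -> forall t x, continuity_pt (fun x => g (Z x t)) x).
  { intros g Lg t x. apply (locLip_cont1 _ Lg t x). }
  assert (CB : forall g, locLip (fun q => g (Z (fst q) (snd q))) -> forall s y, continuity_pt (fun y => g (Z s y)) y).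
  { intros g Lg s y. apply (locLip_cont2 _ Lg s y). }
  assert (Key : forall s t, RInt (fun x => Hq (x, t)) s K + alpha * RInt (fun y => Hq (s, y)) t K = 0).
  { intros s t. specialize (HV (Z s t)). unfold Valpha in HV. rewrite !Ha, !Hb in HV.
    rewrite (RA h1 L1), (RA h2 L2), (RB h1 L1), (RB h2 L2) in HV;
      try (intros; apply Zs; auto).
    assert (EA : RInt (fun x => Hq (x, t)) s K = RInt (fun x => h1 (Z x t)) s K - RInt (fun x => h2 (Z x t)) s K).
    { rewrite <- minusR. rewrite <- (@RInt_minus R_CompleteNormedModule). apply RInt_ext; intros; reflexivity.
      apply exR; apply CA; auto. apply exR; apply CA; auto. }
    assert (EB : RInt (fun y => Hq (s, y)) t K = RInt (fun y => h1 (Z s y)) t K - RInt (fun y => h2 (Z s y)) t K).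
    { rewrite <- minusR. rewrite <- (@RInt_minus R_CompleteNormedModule). apply RInt_ext; intros; reflexivity.
      apply exR; apply CB; auto. apply exR; apply CB; auto. }
    rewrite EA, EB. lra. }
  intros p.
  set (s := (fst p * snd b - snd p * fst b) / D).
  set (t := (fst a * snd p - snd a * fst p) / D).
  assert (Hp : Z s t = p).
  { apply pair_eq; unfold Z, s, t, D; simpl; field; auto. }
  assert (E := core Hq K alpha HL Key s t). unfold Hq in E. simpl in E. rewrite Hp in E. lra.
Qed.
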